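(* Let $\phi:(G,L_G)\to(H,L_H)$ be a p-bounded homomorphism of groups with word-length functions. If the induced map $\phi_1:H_1(G;\mathbb Q)\to H_1(H;\mathbb Q)$ and the map $\alpha_1(H,L_H)$ are injective, then $\alpha_1(G,L_G)$ is injective.
   Context: $\phi$ is p-bounded if there is a polynomial $p$ with $L_H(\phi(g))\le p(L_G(g))$ for all $g\in G$. For a group $G$ with word-length function $L$, $PH^*(G;\mathbb Q)$ is the cohomology of the subcomplex of the bar cochain complex $\mathrm{Hom}_G(C_*(EG;\mathbb Q),\mathbb Q)$ consisting of $G$-equivariant cochains $\psi$ with $|\psi(1,g_1,\dots,g_n)|\le C(1+\sum_iL(g_i))^k$ for some constants $C,k$ (extended linearly). The inclusion induces $\eta:PH^*(G;\mathbb Q)\to H^*(G;\mathbb Q)$, and $\alpha_*(G,L)$ is the composite $H_*(G;\mathbb Q)\to(H^*(G;\mathbb Q))^*\xrightarrow{\eta^*}(PH^*(G;\mathbb Q))^*$ of the universal-coefficient map and the dual of $\eta$. *)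

(* Defs.v *)
From HB Require Import structures.
From mathcomp Require Import all_boot all_order all_algebra.
From mathcomp Require Import monoid.
From Stdlib Require Import Reals.
From mathcomp Require Import Rstruct.

Set Implicit Arguments.
Unset Strict Implicit.
Unset Printing Implicit Defensive.

Import Order.TTheory GRing.Theory Num.Theory.

Local Open Scope ring_scope.

Definition word_length (G : groupType) (L : G -> R) : Prop :=
  [/\ forall g, 0 <= L g,
      L 1%g = 0,
      forall g, L (g^-1)%g = L g
    & forall g h, L (g * h)%g <= L g + L h].

Definition group_hom (G H : groupType) (phi : G -> H) : Prop :=
  forall x y, phi (x * y)%g = (phi x * phi y)%g.

Definition p_bounded (G H : groupType) (LG : G -> R) (LH : H -> R)
    (phi : G -> H) : Prop :=
  exists p : {poly R}, forall g, LH (phi g) <= p.[LG g].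

(* C_n(EG;Q) is the Q-vector space on (n+1)-tuples (g_0,...,g_n) with
   the diagonal G-action.  Every G-orbit contains exactly one tuple
   (1,h_1,...,h_n); we therefore represent an element of
   C_n(EG;Q) (x)_G Q by a formal finite sum  sum_j a_j [1,h^j]  encoded
   as a list of pairs (a_j, [:: h^j_1; ...; h^j_n]). *)

Definition chain (G : groupType) := seq (rat * seq G).

Definition is_chain (G : groupType) (n : nat) (c : chain G) : bool :=
  all (fun p => size p.2 == n) c.

Definition coef (G : groupType) (c : chain G) (h : seq G) : rat :=
  \sum_(p <- c | p.2 == h) p.1.

Definition chain_eq (G : groupType) (c d : chain G) : Prop :=
  forall h, coef c h = coef d h.

Definition chain_opp (G : groupType) (c : chain G) : chain G :=
  [seq (- p.1, p.2) | p <- c].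

Definition chain_sub (G : groupType) (c d : chain G) : chain G :=
  c ++ chain_opp d.

(** i-th face of (1,h_1,...,h_n), written back in normal form:
    face 0 drops the entry 1, giving (h_1,...,h_n) ~ (1,h_1^-1 h_2,...,h_1^-1 h_n);
    face i (i >= 1) drops h_i. *)
Definition face (G : groupType) (i : nat) (h : seq G) : seq G :=
  match i with
  | 0 => match h with
         | [::] => [::]
         | h1 :: t => [seq (h1^-1 * x)%g | x <- t]
         end
  | i'.+1 => take i' h ++ drop i h
  end.

Definition bd (G : groupType) (c : chain G) : chain G :=
  flatten [seq [seq ((-1) ^+ i * p.1, face i p.2) | i <- iota 0 (size p.2).+1]
          | p <- c].

Definition is_cycle (G : groupType) (n : nat) (c : chain G) : Prop :=
  is_chain n c /\ chain_eq (bd c) [::].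

Definition is_boundary (G : groupType) (n : nat) (c : chain G) : Prop :=
  exists b : chain G, is_chain n.+1 b /\ chain_eq (bd b) c.

(** An equivariant cochain psi is determined by the values
    psi(1,h_1,...,h_n); we encode it by h |-> psi(1,h). *)
Definition cochain (G : groupType) := seq G -> rat.

Definition pair (G : groupType) (psi : cochain G) (c : chain G) : rat :=
  \sum_(p <- c) p.1 * psi p.2.

Definition is_cocycle (G : groupType) (n : nat) (psi : cochain G) : Prop :=
  forall h : seq G, size h = n.+1 -> pair psi (bd [:: (1, h)]) = 0.

Definition poly_bounded (G : groupType) (L : G -> R) (n : nat)
    (psi : cochain G) : Prop :=
  exists (C : R) (k : nat), forall h : seq G, size h = n ->
    `| ratr (psi h) : R | <= C * (1 + \sum_(g <- h) L g) ^+ k.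

(** alpha_n(G,L) : H_n(G;Q) -> (PH^n(G;Q))^*, [c] |-> ([psi] |-> <psi,c>),
    is injective: two n-cycles with the same pairing against every
    polynomially bounded n-cocycle are homologous. *)
Definition alpha_injective (G : groupType) (L : G -> R) (n : nat) : Prop :=
  forall c d : chain G, is_cycle n c -> is_cycle n d ->
    (forall psi : cochain G, is_cocycle n psi -> poly_bounded L n psi ->
       pair psi c = pair psi d) ->
    is_boundary n (chain_sub c d).

Definition chain_map (G H : groupType) (phi : G -> H) (c : chain G) : chain H :=
  [seq (p.1, [seq phi x | x <- p.2]) | p <- c].

Definition induced_injective (G H : groupType) (phi : G -> H) (n : nat) : Prop :=
  forall c d : chain G, is_cycle n c -> is_cycle n d ->
    is_boundary n (chain_sub (chain_map phi c) (chain_map phi d)) ->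
    is_boundary n (chain_sub c d).

(* Main.v *)
Require Import Defs.
From mathcomp Require Import all_boot all_order all_algebra.
From mathcomp Require Import monoid.
From Stdlib Require Import Reals.
From mathcomp Require Import Rstruct.

Set Implicit Arguments.
Unset Strict Implicit.
Unset Printing Implicit Defensive.
Import Order.TTheory GRing.Theory Num.Theory.
Local Open Scope ring_scope.

Lemma coef_cons (G : groupType) p (x : chain G) h :
  coef (p :: x) h = (if p.2 == h then p.1 else 0) + coef x h.
Proof. by rewrite /coef big_cons; case: ifP => //; rewrite add0r. Qed.

Lemma pair_coef (G : groupType) (psi : cochain G) (x : chain G) (s : seq (seq G)) :
  uniq s -> {subset unzip2 x <= s} ->
  pair psi x = \sum_(h <- s) coef x h * psi h.
Proof.
move=> us; elim: x => [|p x IH] sub.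
  by rewrite /pair big_nil big1 // => h _; rewrite /coef big_nil mul0r.
rewrite /pair big_cons -/(pair psi x) IH; last by move=> h hx; apply: sub; rewrite inE hx orbT.
have ps : p.2 \in s by apply: sub; rewrite inE eqxx.
rewrite [RHS](eq_bigr (fun h => (if p.2 == h then p.1 else 0) * psi h + coef x h * psi h)); last first.
  by move=> h _; rewrite (coef_cons p x h) mulrDl.
rewrite big_split /=; congr (_ + _).
rewrite (bigD1_seq p.2) //= eqxx big1 ?addr0 // => h hne.
by rewrite eq_sym (negbTE hne) mul0r.
Qed.

Lemma pair_eq (G : groupType) (psi : cochain G) (x y : chain G) :
  chain_eq x y -> pair psi x = pair psi y.
Proof.
move=> e; set s := undup (unzip2 x ++ unzip2 y).
rewrite (@pair_coef _ _ x s) ?undup_uniq; last by move=> h hx; rewrite mem_undup mem_cat hx.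
rewrite (@pair_coef _ _ y s) ?undup_uniq; last by move=> h hx; rewrite mem_undup mem_cat hx orbT.
  by apply: eq_bigr => h _; rewrite e.
all: by [].
Qed.

Lemma pair_map (G H : groupType) (phi : G -> H) (psi : cochain H) c :
  pair psi (chain_map phi c) = pair (fun h => psi (map phi h)) c.
Proof. by rewrite /pair /chain_map big_map. Qed.

Lemma coef_map (G H : groupType) (phi : G -> H) c h' :
  coef (chain_map phi c) h' = pair (fun h => (map phi h == h')%:R) c.
Proof.
rewrite /coef /pair /chain_map big_map big_mkcond /=; apply: eq_bigr => p _.
by case: eqP => _; rewrite ?mulr1 ?mulr0.
Qed.

Section Hom.
Variables (G H : groupType) (phi : G -> H).
Hypothesis hom : group_hom phi.

Lemma phi1 : phi 1%g = 1%g.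
Proof.
have := hom 1%g 1%g; rewrite mul1g => e.
by apply: (@mulgI _ (phi 1%g)); rewrite -e mulg1.
Qed.

Lemma phiV x : phi (x^-1)%g = ((phi x)^-1)%g.
Proof.
apply: (@mulgI _ (phi x)); rewrite -hom mulgV mulgV; exact: phi1.
Qed.

Lemma face_map i h : face i (map phi h) = map phi (face i h).
Proof.
case: i => [|i] /=.
  case: h => [|h1 t] //=; elim: t => //= y t ->.
  by rewrite /= hom phiV.
by rewrite map_cat map_take map_drop.
Qed.

Lemma aux (a : rat) h r :
  map (fun p => (p.1, map phi p.2)) [seq ((-1)^+i * a, face i h) | i <- r] =
  [seq ((-1)^+i * a, face i (map phi h)) | i <- r].
Proof. by elim: r => //= i r ->; rewrite face_map. Qed.

Lemma bd_map c : bd (chain_map phi c) = chain_map phi (bd c).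
Proof.
rewrite /bd /chain_map map_flatten; congr flatten.
elim: c => [|p c IHc] //; rewrite map_cons map_cons map_cons IHc; congr (_ :: _).
have := aux p.1 p.2 (iota 0 (size p.2).+1).
move=> E; rewrite size_map; exact: (esym E).
Qed.

Lemma cycle_map n c : is_cycle n c -> is_cycle n (chain_map phi c).
Proof.
case=> hc hb; split.
  by rewrite /is_chain /chain_map all_map; apply: sub_all hc => p /=; rewrite size_map.
move=> h'; rewrite bd_map coef_map (pair_eq _ hb) /pair big_nil /coef big_nil //.
Qed.

Lemma cocycle_pull n (psi : cochain H) :
  is_cocycle n psi -> is_cocycle n (fun h => psi (map phi h)).
Proof.
move=> hp h sh; rewrite -pair_map -bd_map /chain_map /=; apply: hp.
by rewrite size_map.
Qed.
End Hom.

Lemma poly_growth (p : {poly R}) : exists M : R, exists m : nat,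
  0 <= M /\ forall x : R, 0 <= x -> 1 + p.[x] <= M * (1 + x) ^+ m.
Proof.
exists (1 + \sum_(i < size p) `|p`_i|), (size p); split.
  by rewrite addr_ge0 // sumr_ge0.
move=> x x0.
have x1 : 1 <= 1 + x by rewrite lerDl.
have e1 : 1 <= (1 + x) ^+ size p by exact: exprn_ege1.
rewrite mulrDl mul1r lerD //.
rewrite horner_coef mulr_suml; apply: ler_sum => i _.
apply: (le_trans (ler_norm _)); rewrite normrM normrX (ger0_norm x0).
apply: ler_wpM2l => //.
apply: (@le_trans _ _ ((1 + x) ^+ i)).
  by apply: lerXn2r; rewrite ?nnegrE ?lerDr // (le_trans _ x1).
by apply: ler_weXn2l => //; apply: ltnW.
Qed.

Theorem lemma1p4p3 (G H : groupType) (LG : G -> R) (LH : H -> R)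
    (phi : G -> H) :
  word_length LG -> word_length LH ->
  group_hom phi -> p_bounded LG LH phi ->
  induced_injective phi 1 ->
  alpha_injective LH 1 ->
  alpha_injective LG 1.
Proof.
move=> wG wH hom [p hp] inj alH c d cc cd hpair.
apply: (inj _ _ cc cd).
apply: alH; [exact: (cycle_map hom cc) | exact: (cycle_map hom cd) | idtac].
move=> psi coc [C [k hb]]; rewrite !pair_map.
apply: hpair; first exact: (cocycle_pull hom).
have [M [m [M0 hM]]] := poly_growth p.
case: wG => LG0 LG1 _ _; case: wH => LH0 LH1 _ _.
have C0 : 0 <= C.
  have := hb [:: 1%g] erefl; rewrite big_seq1 LH1 addr0 expr1n mulr1.
  exact: le_trans (normr_ge0 _).
exists (C * M ^+ k), (m * k)%N => h; case: h => [|g [|]] //= _.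
rewrite big_seq1.
apply: (le_trans (hb [:: phi g] erefl)); rewrite big_seq1.
rewrite -mulrA; apply: ler_wpM2l => //.
rewrite exprM -exprMn; apply: lerXn2r; rewrite ?nnegrE.
- by rewrite addr_ge0.
- by rewrite mulr_ge0 // exprn_ge0 // addr_ge0.
apply: le_trans (hM _ (LG0 g)); rewrite lerD2l; exact: hp.
Qed.
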